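(* For every integer $n\geq -1$, the polynomial $e_1^{n}\,\tilde e_1^{\,n-1}\in\mathbb{Z}\langle X\rangle$ is a polynomial with Jordan property.
   Context: Rings are associative with $1$; homomorphisms preserve $1$. A Jordan homomorphism $\alpha:R\to R'$ is a map with $(a+b)^\alpha=a^\alpha+b^\alpha$, $1^\alpha=1'$, $(aba)^\alpha=a^\alpha b^\alpha a^\alpha$ for all $a,b\in R$. Let $\mathbb{Z}\langle X\rangle$ be the free $\mathbb{Z}$-algebra on non-commuting indeterminates $x_1,x_2,\ldots$. For a finite or infinite sequence $T=(t_1,t_2,\ldots)$ in a ring $R$, $f(T)$ denotes the image of $f\in\mathbb{Z}\langle X\rangle$ under the homomorphism $x_i\mapsto t_i$ (finite sequences are padded with zeros, i.e. $x_i\mapsto 0$ for $i$ beyond the length). A polynomial $f\in\mathbb{Z}\langle X\rangle$ has the Jordan property if $f(T)^\alpha=f(T^\alpha)$ for every Jordan homomorphism $\alpha:R\to R'$ between arbitrary rings and every finite or infinite sequence $T$ in $R$, where $T^\alpha=(t_1^\alpha,t_2^\alpha,\ldots)$. Define $e^{(-2)}:=-1$, $e^{(-1)}:=0$, $e^{(0)}:=1$, $e^{(n)}:=e^{(n-1)}x_n-e^{(n-2)}$ for $n\geq1$. Put $e_1^{m}:=e^{(m)}$ for $m\geq -2$, and $\tilde e_1^{\,m}:=e^{(m)}(x_m,x_{m-1},\ldots,x_1)$ (the polynomial obtained from $e^{(m)}$ by substituting $x_i\mapsto x_{m+1-i}$ for $i\leq m$) for $m\geq 1$, $\tilde e_1^{\,m}:=e^{(m)}$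 for $-2\leq m\leq 0$. *)

(* Defs.v *)
From mathcomp Require Import all_boot all_algebra.
Set Implicit Arguments. Unset Strict Implicit. Unset Printing Implicit Defensive.
Import GRing.Theory.
Local Open Scope ring_scope.

(* Elements of the free Z-algebra Z<x_1, x_2, ...> on non-commuting
   indeterminates, presented by ring expressions.  Variable x_i is [NVar i]
   (index 0 is unused; indices start at 1 as in the paper). A polynomial is
   only ever used through its evaluation [neval], which is the unique ring
   homomorphism Z<X> -> R sending x_i to t_i, so this is faithful. *)
Inductive ncpoly : Type :=
| NVar : nat -> ncpoly
| NConst : int -> ncpoly
| NAdd : ncpoly -> ncpoly -> ncpoly
| NOpp : ncpoly -> ncpoly
| NMul : ncpoly -> ncpoly -> ncpoly.

(* f(T) for a sequence T = (t_1, t_2, ...) in R, given as T : nat -> R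
   (t_i = T i; T 0 is ignored).  Finite sequences are padded with zeros. *)
Fixpoint neval (R : pzRingType) (T : nat -> R) (f : ncpoly) : R :=
  match f with
  | NVar i => T i
  | NConst z => z%:~R
  | NAdd p q => neval T p + neval T q
  | NOpp p => - neval T p
  | NMul p q => neval T p * neval T q
  end.

Fixpoint nsubst (s : nat -> ncpoly) (f : ncpoly) : ncpoly :=
  match f with
  | NVar i => s i
  | NConst z => NConst z
  | NAdd p q => NAdd (nsubst s p) (nsubst s q)
  | NOpp p => NOpp (nsubst s p)
  | NMul p q => NMul (nsubst s p) (nsubst s q)
  end.

Definition jordan_hom (R R' : pzRingType) (alpha : R -> R') : Prop :=
  [/\ forall a b, alpha (a + b) = alpha a + alpha b,
      alpha 1 = 1 &
      forall a b, alpha (a * b * a) = alpha a * alpha b * alpha a].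

Definition jordan_property (f : ncpoly) : Prop :=
  forall (R R' : pzRingType) (alpha : R -> R') (T : nat -> R),
    jordan_hom alpha -> alpha (neval T f) = neval (fun i => alpha (T i)) f.

(* e^(k) for k >= 0:  e^(0) = 1, e^(1) = e^(0) x_1 - e^(-1) = x_1,
   e^(k+2) = e^(k+1) x_(k+2) - e^(k). *)
Fixpoint epos (k : nat) : ncpoly * ncpoly :=
  (* returns (e^(k), e^(k-1)), with e^(-1) = 0 *)
  match k with
  | 0 => (NConst 1, NConst 0)
  | k'.+1 => let (a, b) := epos k' in
             (NAdd (NMul a (NVar k'.+1)) (NOpp b), a)
  end.

(* e^(m) for m : int, m >= -2 (e^(-1) = 0, e^(-2) = -1; other negative
   values are irrelevant and set to 0). *)
Definition epoly (m : int) : ncpoly :=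
  match m with
  | Posz k => (epos k).1
  | Negz 0 => NConst 0
  | Negz 1 => NConst (-1)
  | Negz _ => NConst 0
  end.

Definition e1 (m : int) : ncpoly := epoly m.

(* tilde e_1^m := e^(m)(x_m, ..., x_1) for m >= 1, i.e. x_i |-> x_(m+1-i)
   for i <= m;  := e^(m) for -2 <= m <= 0. *)
Definition te1 (m : int) : ncpoly :=
  match m with
  | Posz k.+1 =>
      nsubst (fun i => if (1 <= i <= k.+1)%N then NVar (k.+2 - i) else NVar i)
             (epoly m)
  | _ => epoly m
  end.

(* Main.v *)
Require Import Defs.
From mathcomp Require Import all_boot all_algebra.
From mathcomp Require Import zify.
Set Implicit Arguments. Unset Strict Implicit.
Import GRing.Theory.
Local Open Scope ring_scope.

Lemma acs_step (S : pzRingType) (a l r w : S) : r = a + w -> l = w -> a + l = r.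
Proof. by move=> -> ->. Qed.
Lemma pull_deeper (S : pzRingType) (a b z w : S) : z = a + w -> b + z = a + (b + w).
Proof. by move=> ->; rewrite addrCA. Qed.

Ltac pulll :=
  lazymatch goal with
  | |- ?b + ?z = ?a + _ => first [ reflexivity | eapply pull_deeper; pulll ]
  end.

Ltac acs0 :=
  lazymatch goal with
  | |- 0 = 0 => reflexivity
  | |- _ + _ = _ => eapply acs_step; [pulll | acs0]
  end.

Ltac acs := rewrite -[LHS]addr0 -[RHS]addr0 -?addrA; acs0.

Ltac nc_norm := rewrite ?(mulrDl, mulrDr, mulrBl, mulrBr, mulNr, mulrN, mulr1, mul1r, mulr0, mul0r, opprD, opprB, opprK, addr0, add0r, subr0, sub0r, mulrA, addrA); rewrite -?addrA.

Lemma trip_id (S : pzRingType) (a b c : S) : a*b*c + c*b*a = (a+c)*b*(a+c) - a*b*a - c*b*c.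
Proof.
apply/eqP; rewrite eq_sym !subr_eq; apply/eqP.
nc_norm. acs.
Qed.

Section Cont.
Variable R : pzRingType.
Implicit Types U V : nat -> R.

Fixpoint cont2 U (k : nat) : R * R :=
  match k with
  | 0%N => (1, 0)
  | k'.+1 => let (a, b) := cont2 U k' in (a * U k'.+1 - b, a)
  end.

Fixpoint q2 U (k : nat) : R * R :=
  match k with
  | 0%N => (1, 0)
  | k'.+1 => let (a, b) := q2 U k' in (U k'.+1 * a - b, a)
  end.

Definition cont U k := (cont2 U k).1.
Definition contm U k := (cont2 U k).2.
Definition qq U k := (q2 U k).1.
Definition sh U i := U i.+1.
Definition rev k U i := if (1 <= i <= k)%N then U (k.+1 - i)%N else U i.

Lemma cont0 U : cont U 0 = 1. Proof. by []. Qed.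
Lemma contm0 U : contm U 0 = 0. Proof. by []. Qed.
Lemma qq0 U : qq U 0 = 1. Proof. by []. Qed.
Lemma contS U k : cont U k.+1 = cont U k * U k.+1 - contm U k.
Proof. by rewrite /cont /contm /=; case: (cont2 U k). Qed.
Lemma contmS U k : contm U k.+1 = cont U k.
Proof. by rewrite /cont /contm /=; case: (cont2 U k). Qed.
Lemma contSS U k : cont U k.+2 = cont U k.+1 * U k.+2 - cont U k.
Proof. by rewrite contS contmS. Qed.
Lemma cont1 U : cont U 1 = U 1.
Proof. by rewrite contS /cont /contm /= mul1r subr0. Qed.
Lemma qq1 U : qq U 1 = U 1.
Proof. by rewrite /qq /= mulr1 subr0. Qed.
Lemma qqSS U k : qq U k.+2 = U k.+2 * qq U k.+1 - qq U k.
Proof. by rewrite /qq /=; case: (q2 U k). Qed.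

Lemma cont_ext U V k : (forall i, (0 < i <= k)%N -> U i = V i) -> cont2 U k = cont2 V k.
Proof.
elim: k => [//|k IH] H /=.
rewrite IH; last by move=> i /andP[h1 h2]; apply: H; lia.
by rewrite (H k.+1) //; lia.
Qed.

Lemma contL V k : cont V k.+1 = V 1 * cont (sh V) k - contm (sh (sh V)) k.
Proof.
suff H : cont V k.+1 = V 1 * cont (sh V) k - contm (sh (sh V)) k /\
         cont V k.+2 = V 1 * cont (sh V) k.+1 - contm (sh (sh V)) k.+1 by case: H.
elim: k => [|k [IH1 IH2]].
  by split; rewrite ?contSS !cont1 ?cont0 ?contm0 ?mulr1 ?subr0.
split => //.
rewrite [cont V k.+3]contSS IH1 IH2 !contmS [cont (sh V) k.+2]contSS [cont (sh (sh V)) k.+1]contS.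
rewrite /sh; cbv beta. nc_norm. acs.
Qed.

Lemma q_rev k U : cont (rev k U) k = qq U k.
Proof.
suff H : cont (rev k U) k = qq U k /\ cont (rev k.+1 U) k.+1 = qq U k.+1 by case: H.
elim: k => [|k [IH1 IH2]].
  by split => //; rewrite cont1 qq1 /rev /=.
split => //.
rewrite contL contmS qqSS.
have -> : rev k.+2 U 1 = U k.+2 by rewrite /rev /= subn1.
congr (_ * _ - _).
  rewrite -IH2 /cont (@cont_ext _ (rev k.+1 U)) // => i /andP[h1 h2].
  rewrite /sh /rev.
  have -> : (1 <= i.+1 <= k.+2)%N = true by apply/andP; split; lia.
  have -> : (1 <= i <= k.+1)%N = true by apply/andP; split; lia.
  congr U; lia.
rewrite -IH1 /cont (@cont_ext _ (rev k U)) // => i /andP[h1 h2].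
rewrite /sh /rev.
have -> : (1 <= i.+2 <= k.+2)%N = true by apply/andP; split; lia.
have -> : (1 <= i <= k)%N = true by apply/andP; split; lia.
congr U; lia.
Qed.

Definition Z T k s := cont T k * s * qq T k.
Definition Vv T k y z := cont T k.+1 * y * z * qq T k + cont T k * z * y * qq T k.+1.
Definition A T k := cont T k.+1 * qq T k.
Definition B T k := cont T k * qq T k.+1.

Lemma Z0 T s : Z T 0 s = s.
Proof. by rewrite /Z /cont /qq /= mulr1 mul1r. Qed.
Lemma Z1 T s : Z T 1 s = T 1 * s * T 1.
Proof. by rewrite /Z cont1 qq1. Qed.
Lemma V0 T y z : Vv T 0 y z = T 1 * y * z + z * y * T 1.
Proof. by rewrite /Vv cont1 qq1 /cont /qq /= !mulr1 !mul1r. Qed.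
Lemma A0 T : A T 0 = T 1.
Proof. by rewrite /A cont1 /qq /= mulr1. Qed.
Lemma B0 T : B T 0 = T 1.
Proof. by rewrite /B qq1 /cont /= mul1r. Qed.

Lemma ZSS T k s : Z T k.+2 s = Z T k.+1 (T k.+2 * s * T k.+2) - Vv T k (T k.+2) s + Z T k s.
Proof. rewrite /Z /Vv contSS qqSS. nc_norm. acs. Qed.
Lemma VSS T k y z : Vv T k.+1 y z = Z T k.+1 (T k.+2 * y * z + z * y * T k.+2) - Vv T k z y.
Proof. rewrite /Z /Vv contSS qqSS. nc_norm. acs. Qed.
Lemma ASS T k : A T k.+1 = Z T k.+1 (T k.+2) - B T k.
Proof. rewrite /Z /A /B contSS. nc_norm. acs. Qed.
Lemma BSS T k : B T k.+1 = Z T k.+1 (T k.+2) - A T k.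
Proof. rewrite /Z /A /B qqSS. nc_norm. acs. Qed.

End Cont.

Section Jordan.
Variables (R R' : pzRingType) (al : R -> R').
Hypothesis Hal : jordan_hom al.

Lemma aD a b : al (a + b) = al a + al b. Proof. by case: Hal. Qed.
Lemma aU a b : al (a * b * a) = al a * al b * al a. Proof. by case: Hal. Qed.
Lemma a0 : al 0 = 0.
Proof. by apply: (@addrI _ (al 0)); rewrite -aD !addr0. Qed.
Lemma aN a : al (- a) = - al a.
Proof. by apply: (@addrI _ (al a)); rewrite -aD !subrr a0. Qed.
Lemma aB a b : al (a - b) = al a - al b. Proof. by rewrite aD aN. Qed.
Lemma aT a b c : al (a*b*c + c*b*a) = al a * al b * al c + al c * al b * al a.
Proof. by rewrite !trip_id !aB !aU aD. Qed.

Variable T : nat -> R.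
Let T' := fun i => al (T i).

Lemma JZ k : (forall s, al (Z T k s) = Z T' k (al s)) /\
             (forall s, al (Z T k.+1 s) = Z T' k.+1 (al s)) /\
             (forall y z, al (Vv T k y z) = Vv T' k (al y) (al z)).
Proof.
elim: k => [|k [H0 [H1 HV]]].
  split; first by move=> s; rewrite !Z0.
  split; first by move=> s; rewrite !Z1 aU.
  by move=> y z; rewrite !V0 aT.
split => //; split.
  by move=> s; rewrite !ZSS aD aB H1 HV H0 aU.
by move=> y z; rewrite !VSS aB H1 HV aT.
Qed.

Lemma JA k : al (A T k) = A T' k /\ al (B T k) = B T' k.
Proof.
elim: k => [|k [IA IB]]; first by rewrite !A0 !B0.
have [_ [H1 _]] := JZ k.
by rewrite !ASS !BSS !aB H1 IA IB.
Qed.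

End Jordan.

Lemma neval_nsubst (R : pzRingType) (T : nat -> R) s f :
  neval T (nsubst s f) = neval (fun i => neval T (s i)) f.
Proof. by elim: f => //= [p -> q ->|p ->|p -> q ->]. Qed.

Lemma neval_epos (R : pzRingType) (U : nat -> R) k :
  neval U (epos k).1 = cont U k /\ neval U (epos k).2 = contm U k.
Proof.
elim: k => [//|k [IH1 IH2]].
rewrite contS contmS -IH1 -IH2 /=.
by case: (epos k).
Qed.

Lemma neval_te1 (R : pzRingType) (T : nat -> R) k : neval T (te1 (Posz k)) = qq T k.
Proof.
case: k => [//|k].
rewrite /te1 neval_nsubst /epoly.
have [-> _] := neval_epos (fun i => neval T (if (1 <= i <= k.+1)%N then NVar (k.+2 - i) else NVar i)) k.+1.
rewrite -q_rev /cont (@cont_ext _ _ (rev k.+1 T)) // => i _.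
by rewrite /rev; case: ifP.
Qed.

Theorem proposition3p3 (n : int) :
  -1 <= n -> jordan_property (NMul (e1 n) (te1 (n - 1))).
Proof.
move=> hn R R' al T Hal.
case: n hn => [[|k]|[|k]] hn //.
- by rewrite /= mulr0 a0 // mulr0.
- have -> : (Posz k.+1 - 1) = Posz k by rewrite -addn1 PoszD addrK.
  rewrite /= !neval_te1 /e1 /epoly.
  have [-> _] := neval_epos T k.+1.
  have [-> _] := neval_epos (fun i => al (T i)) k.+1.
  by have [-> _] := JA Hal T k.
- by rewrite /= mul0r mul0r a0.
Qed.
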